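(* Let $\mathfrak p=(p_i)_{i\in\mathbb N}$ be a probability distribution supported by $\mathbb N$ and let $D\subseteq\mathbb N$ be nonempty (finite or infinite). If $d\ge 0$ satisfies $\sum_{i\in D}p_i^{d}=1$, then $\dim_H \pi_{\mathfrak p}(D^{\mathbb N})=d$.
   Context: $\mathbb N=\{1,2,3,\dots\}$. A probability distribution $\mathfrak p=(p_i)_{i\in\mathbb N}$ is supported by $\mathbb N$ if $p_i\in(0,1)$ for all $i$ and $\sum_{i=1}^\infty p_i=1$. Set $\widehat{p_1}=0$ and $\widehat{p_n}=\sum_{i=1}^{n-1}p_i$ for $n\ge 2$. For $n\in\mathbb N$ let $T_n:[0,1)\to[0,1)$, $T_n x=p_n x+\widehat{p_n}$. Define $\pi_{\mathfrak p}:\mathbb N^{\mathbb N}\to[0,1)$ by $\pi_{\mathfrak p}((n_j))=\lim_{j\to\infty}T_{n_1}\circ\cdots\circ T_{n_j}(0)=\widehat{p_{n_1}}+\sum_{j=1}^\infty p_{n_1}\cdots p_{n_j}\widehat{p_{n_{j+1}}}$; this is a bijection onto $[0,1)$, and for $x\in[0,1)$ the entries of $\pi_{\mathfrak p}^{-1}(x)$ are called the digits of $x$ with respect to $\mathfrak p$. $\dim_H$ denotes Hausdorff dimension. *)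

(* Defs.v *)
From Stdlib Require Import Reals Lra ClassicalEpsilon.
Open Scope R_scope.

(** Digits are 0-based: index i : nat stands for the paper's i+1. *)

Fixpoint phat (p : nat -> R) (n : nat) : R :=
  match n with O => 0 | S m => phat p m + p m end.

Definition Tmap (p : nat -> R) (n : nat) (x : R) : R := p n * x + phat p n.

Fixpoint comp (p : nat -> R) (j : nat) (w : nat -> nat) (x : R) : R :=
  match j with
  | O => x
  | S j' => Tmap p (w O) (comp p j' (fun k => w (S k)) x)
  end.

Definition is_pi (p : nat -> R) (w : nat -> nat) (x : R) : Prop :=
  Un_cv (fun j => comp p j w 0) x.

Definition pi_image (p : nat -> R) (D : nat -> Prop) : R -> Prop :=
  fun x => exists w : nat -> nat, (forall k, D (w k)) /\ is_pi p w x.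

Definition rpow (r s : R) : R :=
  if Req_EM_T r 0 then (if Req_EM_T s 0 then 1 else 0) else Rpower r s.

Definition is_diam (U : R -> Prop) (r : R) : Prop :=
  is_lub (fun t => exists x y, U x /\ U y /\ t = Rabs (x - y)) r.

Definition delta_cover (delta : R) (E : R -> Prop)
  (U : nat -> R -> Prop) (r : nat -> R) : Prop :=
  (forall x, E x -> exists n, U n x) /\
  (forall n, (exists x, U n x) -> is_diam (U n) (r n) /\ r n <= delta).

Definition cover_term (s : R) (U : nat -> R -> Prop) (r : nat -> R) (n : nat) : R :=
  match excluded_middle_informative (exists x, U n x) with
  | left _ => rpow (r n) s
  | right _ => 0
  end.

(** H^s(E) = 0, i.e. H^s_delta(E) = inf over delta-covers of sum |U_n|^s
    is 0 for every delta > 0 (H^s = sup_delta H^s_delta). *)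
Definition hausdorff_null (s : R) (E : R -> Prop) : Prop :=
  forall delta eps, 0 < delta -> 0 < eps ->
    exists U r l, delta_cover delta E U r /\
      infinite_sum (cover_term s U r) l /\ l <= eps.

Definition hausdorff_dim_is (E : R -> Prop) (d : R) : Prop :=
  (forall s, 0 <= s -> hausdorff_null s E -> d <= s) /\
  (forall b, (forall s, 0 <= s -> hausdorff_null s E -> b <= s) -> b <= d).

Definition restr_pow (p : nat -> R) (D : nat -> Prop) (d : R) (i : nat) : R :=
  match excluded_middle_informative (D i) with
  | left _ => Rpower (p i) d
  | right _ => 0
  end.

(* Main.v *)
Require Import Defs.
From Stdlib Require Import Reals.
From Stdlib Require Import Lra Lia List ClassicalEpsilon Classical.
Import Defs.
Import ListNotations.
Open Scope R_scope.

Fixpoint lsum {A : Type} (f : A -> R) (l : list A) : R :=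
  match l with [] => 0 | a :: l' => f a + lsum f l' end.

Lemma lsum_nonneg {A} (f : A -> R) l : (forall a, In a l -> 0 <= f a) -> 0 <= lsum f l.
Proof. induction l; simpl; intros H. lra. pose proof (H a (or_introl eq_refl)).
  assert (0 <= lsum f l) by (apply IHl; auto). lra. Qed.

Lemma lsum_In_le {A} (f : A -> R) l a : (forall a, In a l -> 0 <= f a) -> In a l -> f a <= lsum f l.
Proof. induction l; simpl; intros H Ha. contradiction.
  destruct Ha as [<-|Ha].
  - assert (0 <= lsum f l) by (apply lsum_nonneg; auto). lra.
  - pose proof (H a0 (or_introl eq_refl)). assert (f a <= lsum f l) by (apply IHl; auto). lra. Qed.

Lemma lsum_le {A} (f g : A -> R) l : (forall a, In a l -> f a <= g a) -> lsum f l <= lsum g l.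
Proof. induction l; simpl; intros H. lra. pose proof (H a (or_introl eq_refl)).
  assert (lsum f l <= lsum g l) by (apply IHl; auto). lra. Qed.

Lemma lsum_app {A} (f : A -> R) l1 l2 : lsum f (l1 ++ l2) = lsum f l1 + lsum f l2.
Proof. induction l1; simpl; lra. Qed.

Lemma lsum_map {A B} (f : B -> R) (g : A -> B) l : lsum f (map g l) = lsum (fun a => f (g a)) l.
Proof. induction l; simpl; congruence. Qed.

Lemma lsum_scal {A} (f : A -> R) c l : lsum (fun a => c * f a) l = c * lsum f l.
Proof. induction l; simpl. lra. rewrite IHl. lra. Qed.

Lemma lsum_ext {A} (f g : A -> R) l : (forall a, In a l -> f a = g a) -> lsum f l = lsum g l.
Proof. induction l; simpl; intros H. lra. rewrite H by auto. rewrite IHl by auto. lra. Qed.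

Lemma lsum_plus {A} (f g : A -> R) l : lsum (fun a => f a + g a) l = lsum f l + lsum g l.
Proof. induction l; simpl. lra. rewrite IHl. lra. Qed.

Lemma lsum_flat_map {A B} (f : B -> R) (g : A -> list B) l :
  lsum f (flat_map g l) = lsum (fun a => lsum f (g a)) l.
Proof. induction l; simpl. lra. rewrite lsum_app, IHl. lra. Qed.

Definition dec (P : Prop) : bool := if excluded_middle_informative P then true else false.
Definition ind (P : Prop) : R := if excluded_middle_informative P then 1 else 0.
Arguments dec : simpl never.
Arguments ind : simpl never.

Lemma dec_true (P : Prop) : dec P = true <-> P.
Proof. unfold dec; destruct excluded_middle_informative; split; intros; try tauto; discriminate. Qed.

Lemma lsum_filter {A} (f : A -> R) (P : A -> Prop) l :
  lsum f (filter (fun a => dec (P a)) l) = lsum (fun a => ind (P a) * f a) l.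
Proof. induction l; simpl. lra. unfold ind at 1. destruct (dec (P a)) eqn:E.
  - apply (proj1 (dec_true _)) in E. destruct excluded_middle_informative; [|tauto]. simpl. rewrite IHl. lra.
  - destruct excluded_middle_informative as [h|h]. apply (proj2 (dec_true _)) in h. congruence. rewrite IHl. lra. Qed.

Lemma lsum_exchange {A B} (f : A -> B -> R) la lb :
  lsum (fun a => lsum (fun b => f a b) lb) la = lsum (fun b => lsum (fun a => f a b) la) lb.
Proof. induction la; simpl.
  - induction lb; simpl; lra.
  - rewrite IHla. rewrite <- lsum_plus. reflexivity. Qed.

Lemma ind_nonneg P : 0 <= ind P.
Proof. unfold ind; destruct excluded_middle_informative; lra. Qed.

Lemma sum_f_R0_mono (f : nat -> R) n m : (forall k, 0 <= f k) -> (n <= m)%nat -> sum_f_R0 f n <= sum_f_R0 f m.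
Proof. intros H Hnm. induction Hnm. lra. simpl. pose proof (H (S m)). lra. Qed.

Lemma partial_le_lim (f : nat -> R) l N : infinite_sum f l -> (forall k, 0 <= f k) -> sum_f_R0 f N <= l.
Proof. intros Hs Hf. destruct (Rle_dec (sum_f_R0 f N) l) as [h|h]; auto. exfalso.
  destruct (Hs (sum_f_R0 f N - l)) as [M HM]. lra.
  specialize (HM (max N M) (Nat.le_max_r _ _)).
  pose proof (sum_f_R0_mono f N (max N M) Hf (Nat.le_max_l _ _)).
  unfold Rdist in HM. rewrite Rabs_right in HM; lra. Qed.

Lemma sum_f_R0_ge_term (f : nat -> R) i N : (forall k, 0 <= f k) -> (i <= N)%nat -> f i <= sum_f_R0 f N.
Proof. intros Hf Hi. induction Hi.
  - destruct i; simpl. lra. pose proof (sum_f_R0_mono f 0 i Hf ltac:(lia)). simpl in H. pose proof (Hf 0%nat). lra.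
  - simpl. pose proof (Hf (S m)). lra. Qed.

Lemma sum_f_R0_le (f g : nat -> R) N : (forall k, f k <= g k) -> sum_f_R0 f N <= sum_f_R0 g N.
Proof. intros H; induction N; simpl. apply H. pose proof (H (S N)); lra. Qed.

Lemma sum_f_R0_minus (f g : nat -> R) N : sum_f_R0 (fun k => f k - g k) N = sum_f_R0 f N - sum_f_R0 g N.
Proof. induction N; simpl; lra. Qed.

Lemma Rpower_pos x y : 0 < Rpower x y.
Proof. unfold Rpower; apply exp_pos. Qed.

Lemma Rpower_lt_exp x a b : 0 < x < 1 -> a < b -> Rpower x b < Rpower x a.
Proof. intros Hx Hab. unfold Rpower. apply exp_increasing.
  assert (ln x < 0). { rewrite <- ln_1. apply ln_increasing; lra. }
  nra. Qed.

Lemma Rpower_le_exp x a b : 0 < x <= 1 -> a <= b -> Rpower x b <= Rpower x a.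
Proof. intros Hx Hab. unfold Rpower.
  assert (ln x <= 0). { rewrite <- ln_1. destruct (Req_dec x 1). subst; lra. left; apply ln_increasing; lra. }
  assert (b * ln x <= a * ln x) by nra. destruct H0 as [h|h]. left; apply exp_increasing; auto. rewrite h; lra. Qed.

Lemma Rpower_le_base a b c : 0 <= c -> 0 < a <= b -> Rpower a c <= Rpower b c.
Proof. apply Rle_Rpower_l. Qed.

Lemma rpow_le_Rpower r b s : 0 < s -> 0 <= r <= b -> 0 < b -> rpow r s <= Rpower b s.
Proof. intros Hs Hr Hb. unfold rpow. destruct (Req_EM_T r 0).
  - destruct (Req_EM_T s 0). lra. left; apply Rpower_pos.
  - apply Rle_Rpower_l; lra. Qed.

Lemma cv_affine (u : nat -> R) x a b : Un_cv u x -> Un_cv (fun j => a * u j + b) (a * x + b).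
Proof. intros H eps He. destruct (Req_dec a 0).
  - exists 0%nat. intros. subst. unfold Rdist; rewrite Rmult_0_l, Rmult_0_l. rewrite Rminus_diag, Rabs_R0. lra.
  - destruct (H (eps / Rabs a)) as [N HN]. apply Rdiv_lt_0_compat; auto. apply Rabs_pos_lt; auto.
    exists N; intros n Hn. specialize (HN n Hn). unfold Rdist in *.
    replace (a * u n + b - (a * x + b)) with (a * (u n - x)) by ring. rewrite Rabs_mult.
    assert (0 < Rabs a) by (apply Rabs_pos_lt; auto).
    apply (Rmult_lt_compat_l (Rabs a)) in HN; auto. field_simplify in HN; lra. Qed.

Lemma cv_bounds (u : nat -> R) x a b : Un_cv u x -> (forall j, a <= u j <= b) -> a <= x <= b.
Proof. intros H Hb. split.
  - destruct (Rle_dec a x); auto. exfalso. destruct (H (a - x)) as [N HN]. lra.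
    specialize (HN N (le_n _)). specialize (Hb N). unfold Rdist in HN.
    rewrite Rabs_right in HN; lra.
  - destruct (Rle_dec x b); auto. exfalso. destruct (H (x - b)) as [N HN]. lra.
    specialize (HN N (le_n _)). specialize (Hb N). unfold Rdist in HN.
    rewrite Rabs_left in HN; lra. Qed.

Section Pi.
End Pi.

Lemma phat_nonneg p n : (forall i, 0 < p i < 1) -> 0 <= phat p n.
Proof. intros hp; induction n; simpl. lra. pose proof (hp n); lra. Qed.

Lemma phat_mono p m n : (forall i, 0 < p i < 1) -> (m <= n)%nat -> phat p m <= phat p n.
Proof. intros hp H; induction H. lra. simpl. pose proof (hp m0); lra. Qed.

Lemma phat_sum p n : phat p (S n) = sum_f_R0 p n.
Proof. induction n. simpl. lra. change (phat p (S (S n))) with (phat p (S n) + p (S n)). rewrite IHn. reflexivity. Qed.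

Lemma phat_lt1 p n : (forall i, 0 < p i < 1) -> infinite_sum p 1 -> phat p n < 1.
Proof. intros hp hs. assert (phat p (S n) <= 1).
  { rewrite phat_sum. apply partial_le_lim; auto. intros k; pose proof (hp k); lra. }
  simpl in H. pose proof (hp n); lra. Qed.

Lemma Tmap_range p n x : (forall i, 0 < p i < 1) -> 0 <= x <= 1 ->
  phat p n <= Tmap p n x <= phat p (S n).
Proof. intros hp Hx. unfold Tmap; simpl. pose proof (hp n). nra. Qed.

Lemma comp_range p j w : (forall i, 0 < p i < 1) -> infinite_sum p 1 -> 0 <= comp p j w 0 <= 1.
Proof. intros hp hs. revert w; induction j; intros w; simpl. lra.
  pose proof (Tmap_range p (w 0%nat) _ hp (IHj (fun k => w (S k)))).
  pose proof (phat_nonneg p (w 0%nat) hp). pose proof (phat_lt1 p (S (w 0%nat)) hp hs). lra. Qed.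

Lemma comp_le_hat p j w : (forall i, 0 < p i < 1) -> infinite_sum p 1 -> comp p j w 0 <= phat p (S (w 0%nat)).
Proof. intros hp hs. destruct j; simpl.
  - pose proof (phat_nonneg p (S (w 0%nat)) hp). simpl in H. lra.
  - pose proof (Tmap_range p (w 0%nat) _ hp (comp_range p j (fun k => w (S k)) hp hs)). simpl in H. lra. Qed.

Lemma Tmap_mono p n x y : (forall i, 0 < p i < 1) -> x <= y -> Tmap p n x <= Tmap p n y.
Proof. intros hp H. unfold Tmap. pose proof (hp n). nra. Qed.

Lemma comp_grow p j w : (forall i, 0 < p i < 1) -> comp p j w 0 <= comp p (S j) w 0.
Proof. intros hp. revert w; induction j; intros w.
  - simpl. unfold Tmap. pose proof (phat_nonneg p (w 0%nat) hp). lra.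
  - change (comp p (S j) w 0) with (Tmap p (w 0%nat) (comp p j (fun k => w (S k)) 0)).
    change (comp p (S (S j)) w 0) with (Tmap p (w 0%nat) (comp p (S j) (fun k => w (S k)) 0)).
    apply Tmap_mono; auto. Qed.

Lemma pi_exists p w : (forall i, 0 < p i < 1) -> infinite_sum p 1 -> exists x, is_pi p w x.
Proof. intros hp hs.
  assert (h1 : Un_growing (fun j => comp p j w 0)) by (intros n; apply comp_grow; auto).
  assert (h2 : has_ub (fun j => comp p j w 0)).
  { exists 1. intros y [n ->]. apply comp_range; auto. }
  destruct (growing_cv _ h1 h2) as [x Hx]. exists x; exact Hx. Qed.

Lemma pi_range p w x : (forall i, 0 < p i < 1) -> infinite_sum p 1 -> is_pi p w x ->
  0 <= x <= phat p (S (w 0%nat)).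
Proof. intros hp hs H. apply (cv_bounds _ _ _ _ H). intros j. split.
  apply comp_range; auto. apply comp_le_hat; auto. Qed.

Lemma pi_range1 p w x : (forall i, 0 < p i < 1) -> infinite_sum p 1 -> is_pi p w x -> 0 <= x < 1.
Proof. intros hp hs H. pose proof (pi_range p w x hp hs H). pose proof (phat_lt1 p (S (w 0%nat)) hp hs). lra. Qed.

Definition cons_seq (m : nat) (w : nat -> nat) : nat -> nat :=
  fun k => match k with O => m | S k' => w k' end.

Lemma pi_cons p m w x : is_pi p w x -> is_pi p (cons_seq m w) (Tmap p m x).
Proof. intros H. unfold is_pi in *. intros eps He.
  destruct (cv_affine _ _ (p m) (phat p m) H eps He) as [N HN].
  exists (S N). intros n Hn. destruct n. lia. apply HN. lia. Qed.

Lemma comp_ext p j w w' x : (forall k, w k = w' k) -> comp p j w x = comp p j w' x.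
Proof. revert w w'; induction j; intros w w' H; simpl. reflexivity.
  rewrite H. f_equal. apply IHj. intros; apply H. Qed.

Lemma pi_decomp p w x : (forall i, 0 < p i < 1) -> infinite_sum p 1 -> is_pi p w x ->
  exists y, is_pi p (fun k => w (S k)) y /\ x = Tmap p (w 0%nat) y.
Proof. intros hp hs H. destruct (pi_exists p (fun k => w (S k)) hp hs) as [y Hy].
  exists y. split. exact Hy. pose proof (pi_cons p (w 0%nat) _ _ Hy) as H0.
  unfold is_pi in H0.
  assert (H1 : forall j, comp p j (cons_seq (w 0%nat) (fun k => w (S k))) 0 = comp p j w 0).
  { intros j. apply comp_ext. intros [|k]; reflexivity. }
  eapply UL_sequence. exact H. intros e He. destruct (H0 e He) as [N HN]. exists N. intros n Hn.
  rewrite <- H1. apply HN; auto. Qed.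

Definition nthv {T} (h : T -> R) (cl : list T) (n : nat) : R :=
  match nth_error cl n with Some ab => h ab | None => 0 end.

Lemma sum_zero (f : nat -> R) K : (forall n, f n = 0) -> sum_f_R0 f K = 0.
Proof. intros H; induction K; simpl; rewrite H; try rewrite IHK; lra. Qed.

Lemma sum_nthv {T} (h : T -> R) cl K : (length cl <= K)%nat -> sum_f_R0 (nthv h cl) K = lsum h cl.
Proof. revert K; induction cl; intros K HK; simpl.
  - apply sum_zero. intros [|n]; reflexivity.
  - simpl in HK. rewrite decomp_sum by lia. unfold nthv at 1; simpl.
    rewrite <- (IHcl (pred K)) by lia. reflexivity. Qed.

Definition dist_set (U : R -> Prop) : R -> Prop :=
  fun t => exists x y, U x /\ U y /\ t = Rabs (x - y).

Definition diam_of (U : R -> Prop) : R :=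
  match excluded_middle_informative (exists m, is_lub (dist_set U) m) with
  | left h => proj1_sig (constructive_indefinite_description _ h)
  | right _ => 0
  end.

Lemma diam_of_spec (U : R -> Prop) b : (exists x, U x) ->
  (forall x y, U x -> U y -> Rabs (x - y) <= b) ->
  is_diam U (diam_of U) /\ 0 <= diam_of U <= b.
Proof. intros [x0 Hx0] Hb.
  assert (Hex : exists m, is_lub (dist_set U) m).
  { destruct (completeness (dist_set U)) as [m Hm].
    - exists b. intros t (x & y & Hx & Hy & ->). auto.
    - exists 0, x0, x0. repeat split; auto. rewrite Rminus_diag, Rabs_R0; auto.
    - exists m; auto. }
  unfold diam_of. destruct excluded_middle_informative as [h|h]; [|tauto].
  destruct (constructive_indefinite_description _ h) as [m Hm]; simpl.
  split. exact Hm. split.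
  - apply Hm. exists x0, x0. repeat split; auto. rewrite Rminus_diag, Rabs_R0; auto.
  - apply Hm. intros t (x & y & Hx & Hy & ->). auto. Qed.

Lemma list_cover (E : R -> Prop) (cl : list ((R -> Prop) * R)) s delta eps :
  0 < s ->
  (forall x, E x -> exists ab, In ab cl /\ fst ab x) ->
  (forall ab, In ab cl -> 0 < snd ab <= delta /\
     forall x y, fst ab x -> fst ab y -> Rabs (x - y) <= snd ab) ->
  lsum (fun ab => Rpower (snd ab) s) cl <= eps ->
  exists U r l, delta_cover delta E U r /\ infinite_sum (cover_term s U r) l /\ l <= eps.
Proof. intros Hs Hcov Hab Hsum.
  set (U := fun n x => match nth_error cl n with Some ab => fst ab x | None => False end).
  set (r := fun n => diam_of (U n)).
  exists U, r, (sum_f_R0 (cover_term s U r) (length cl)).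
  assert (Hterm : forall n, cover_term s U r n <= nthv (fun ab => Rpower (snd ab) s) cl n).
  { intros n. unfold cover_term, nthv. destruct excluded_middle_informative as [h|h].
    - unfold U in h |- *. destruct (nth_error cl n) as [ab|] eqn:Hn; [|destruct h; contradiction].
      pose proof (nth_error_In _ _ Hn) as Hin. destruct (Hab ab Hin) as [[Hb1 Hb2] Hb3].
      assert (e1 : exists x, U n x) by (unfold U; rewrite Hn; auto).
      assert (e2 : forall x y, U n x -> U n y -> Rabs (x - y) <= snd ab) by (unfold U; rewrite Hn; auto).
      destruct (diam_of_spec (U n) (snd ab) e1 e2) as [_ Hd].
      apply rpow_le_Rpower; auto.
    - destruct (nth_error cl n); [left; apply Rpower_pos|lra]. }
  split; [split|split].
  - intros x Hx. destruct (Hcov x Hx) as [ab [Hin Hx']].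
    destruct (In_nth_error _ _ Hin) as [n Hn]. exists n. unfold U; rewrite Hn; auto.
  - intros n Hne. unfold U in Hne. destruct (nth_error cl n) as [ab|] eqn:Hn; [|destruct Hne; contradiction].
    pose proof (nth_error_In _ _ Hn) as Hin. destruct (Hab ab Hin) as [[Hb1 Hb2] Hb3].
    assert (e1 : exists x, U n x) by (unfold U; rewrite Hn; eauto).
    assert (e2 : forall x y, U n x -> U n y -> Rabs (x - y) <= snd ab) by (unfold U; rewrite Hn; auto).
    destruct (diam_of_spec (U n) (snd ab) e1 e2) as [Hd1 Hd2].
    split. exact Hd1. unfold r. lra.
  - intros e He. exists (length cl). intros n Hn. unfold Rdist.
    replace (sum_f_R0 (cover_term s U r) n) with (sum_f_R0 (cover_term s U r) (length cl)).
    rewrite Rminus_diag, Rabs_R0; auto.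
    induction Hn. reflexivity. simpl. rewrite IHHn.
    assert (cover_term s U r (S m) = 0).
    { unfold cover_term. destruct excluded_middle_informative as [[x h]|h]; auto.
      unfold U in h. rewrite (proj2 (nth_error_None cl (S m))) in h. contradiction. lia. }
    lra.
  - eapply Rle_trans. apply sum_f_R0_le. exact Hterm. rewrite sum_nthv by lia. exact Hsum. Qed.

Lemma phat_to1 p : (forall i, 0 < p i < 1) -> infinite_sum p 1 ->
  forall e, 0 < e -> exists N, 1 - phat p N < e.
Proof. intros hp hs e He. destruct (hs e He) as [N HN]. exists (S N).
  rewrite phat_sum. specialize (HN N (le_n _)). unfold Rdist in HN.
  apply Rabs_def2 in HN. lra. Qed.

Lemma p_small p : (forall i, 0 < p i < 1) -> infinite_sum p 1 ->
  exists M, forall i, (M <= i)%nat -> p i < 1/2.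
Proof. intros hp hs. destruct (hs (1/4)) as [N HN]. lra. exists (S N). intros i Hi.
  destruct i. lia. pose proof (HN (S i) ltac:(lia)). pose proof (HN i ltac:(lia)).
  simpl in H. unfold Rdist in *. apply Rabs_def2 in H. apply Rabs_def2 in H0. lra. Qed.

Lemma p_bound p : (forall i, 0 < p i < 1) -> infinite_sum p 1 ->
  exists lam, 0 < lam < 1 /\ forall i, p i <= lam.
Proof. intros hp hs. destruct (p_small p hp hs) as [M HM].
  assert (exists lam, 1/2 <= lam < 1 /\ forall i, (i < M)%nat -> p i <= lam) as [lam [Hl Hi]].
  { clear HM. induction M. exists (1/2). split. lra. intros; lia.
    destruct IHM as [lam [Hl Hi]].
    exists (Rmax lam (p M)). split. split. eapply Rle_trans; [|apply Rmax_l]; lra.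
    apply Rmax_lub_lt; [lra|apply hp]. intros i Hi'. destruct (Nat.eq_dec i M) as [->|h].
    apply Rmax_r. eapply Rle_trans; [|apply Rmax_l]. apply Hi; lia. }
  exists lam. split. lra. intros i. destruct (Nat.lt_ge_cases i M). auto. specialize (HM i H). lra. Qed.

Definition img (p : nat -> R) (i : nat) (A : R -> Prop) : R -> Prop :=
  fun x => exists y, A y /\ x = Tmap p i y.

Definition Fset (D : nat -> Prop) (N : nat) : list nat := filter (fun i => dec (D i)) (seq 0 N).

Fixpoint cov (p : nat -> R) (D : nat -> Prop) (N : nat) (L : nat) : list ((R -> Prop) * R) :=
  match L with
  | O => [(pi_image p D, 1)]
  | S L' => (fun x => pi_image p D x /\ phat p N <= x, 1 - phat p N) ::
      flat_map (fun i => map (fun ab => (img p i (fst ab), p i * snd ab)) (cov p D N L')) (Fset D N)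
  end.

Lemma Fset_In D N i : In i (Fset D N) <-> D i /\ (i < N)%nat.
Proof. unfold Fset. rewrite filter_In, in_seq, dec_true. split; intros [h1 h2]; split; auto; lia. Qed.

Lemma cov_covers p D N L : (forall i, 0 < p i < 1) -> infinite_sum p 1 ->
  forall x, pi_image p D x -> exists ab, In ab (cov p D N L) /\ fst ab x.
Proof. intros hp hs. induction L; intros x Hx; simpl.
  - exists (pi_image p D, 1). auto.
  - destruct Hx as [w [Hw Hpi]].
    destruct (Nat.lt_ge_cases (w 0%nat) N) as [Hlt|Hge].
    + destruct (pi_decomp p w x hp hs Hpi) as [y [Hy ->]].
      destruct (IHL y) as [ab [Hin Hab]]. exists (fun k => w (S k)). split; auto.
      exists (img p (w 0%nat) (fst ab), p (w 0%nat) * snd ab). split; [right|].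
      * apply in_flat_map. exists (w 0%nat). split. apply Fset_In; auto.
        apply in_map_iff. exists ab; auto.
      * simpl. exists y; auto.
    + eexists. split. left; reflexivity. simpl. split. exists w; auto.
      destruct (pi_decomp p w x hp hs Hpi) as [y [Hy ->]].
      pose proof (pi_range1 p _ y hp hs Hy). unfold Tmap. pose proof (hp (w 0%nat)).
      pose proof (phat_mono p N (w 0%nat) hp Hge). nra. Qed.

Lemma cov_props p D N L lam : (forall i, 0 < p i < 1) -> infinite_sum p 1 ->
  0 < lam < 1 -> (forall i, p i <= lam) ->
  forall ab, In ab (cov p D N L) -> 0 < snd ab <= Rmax (1 - phat p N) (lam ^ L) /\
     forall x y, fst ab x -> fst ab y -> Rabs (x - y) <= snd ab.
Proof. intros hp hs Hl Hpl. pose proof (phat_lt1 p N hp hs) as HN.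
  induction L; intros ab Hin; simpl in Hin.
  - destruct Hin as [<-|[]]. simpl. split. split. lra. apply Rmax_r.
    intros x y [w1 [_ H1]] [w2 [_ H2]]. apply pi_range1 in H1; auto. apply pi_range1 in H2; auto.
    apply Rabs_le. lra.
  - destruct Hin as [<-|Hin]. simpl. split. split. lra. apply Rmax_l.
    + intros x y [[w1 [_ H1]] h1] [[w2 [_ H2]] h2]. apply pi_range1 in H1; auto. apply pi_range1 in H2; auto.
      apply Rabs_le. lra.
    + apply in_flat_map in Hin. destruct Hin as [i [_ Hin]]. apply in_map_iff in Hin.
      destruct Hin as [ab' [<- Hin]]. destruct (IHL ab' Hin) as [[Hb1 Hb2] Hb3]. simpl.
      pose proof (hp i). pose proof (Hpl i). split. split. nra.
      * assert (p i * snd ab' <= lam * Rmax (1 - phat p N) (lam ^ L)) by nra.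
        eapply Rle_trans. exact H1. simpl. unfold Rmax at 1.
        destruct (Rle_dec (1 - phat p N) (lam ^ L)).
        -- eapply Rle_trans; [|apply Rmax_r]. lra.
        -- eapply Rle_trans; [|apply Rmax_l]. nra.
      * intros x y [x' [Hx ->]] [y' [Hy ->]]. unfold Tmap.
        replace (p i * x' + phat p i - (p i * y' + phat p i)) with (p i * (x' - y')) by ring.
        rewrite Rabs_mult, Rabs_right by lra. apply Rmult_le_compat_l. lra. apply Hb3; auto.
Qed.

Lemma lsum_seq (f : nat -> R) n : lsum f (seq 0 (S n)) = sum_f_R0 f n.
Proof. induction n. simpl. lra. rewrite seq_S, lsum_app, IHn. simpl. lra. Qed.

Lemma restr_pow_nonneg p D d i : 0 <= restr_pow p D d i.
Proof. unfold restr_pow. destruct excluded_middle_informative. left; apply Rpower_pos. lra. Qed.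

Lemma Fset_sum p D d N : infinite_sum (restr_pow p D d) 1 ->
  lsum (fun i => Rpower (p i) d) (Fset D N) <= 1.
Proof. intros H. unfold Fset. rewrite lsum_filter.
  rewrite (lsum_ext _ (restr_pow p D d)).
  - destruct N. simpl; lra. rewrite lsum_seq. apply partial_le_lim; auto. apply restr_pow_nonneg.
  - intros a _. unfold ind, restr_pow. destruct excluded_middle_informative; lra. Qed.

Lemma cost_step p D N L s lam : (forall i, 0 < p i < 1) -> infinite_sum p 1 ->
  0 < lam < 1 -> (forall i, p i <= lam) ->
  lsum (fun ab => Rpower (snd ab) s) (cov p D N (S L)) =
  Rpower (1 - phat p N) s + lsum (fun i => Rpower (p i) s) (Fset D N) *
     lsum (fun ab => Rpower (snd ab) s) (cov p D N L).
Proof. intros hp hs Hl Hpl. simpl. f_equal. rewrite lsum_flat_map.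
  rewrite Rmult_comm, <- lsum_scal. apply lsum_ext. intros i _.
  rewrite lsum_map. simpl. rewrite Rmult_comm, <- lsum_scal. apply lsum_ext.
  intros ab Hab. destruct (cov_props p D N L lam hp hs Hl Hpl ab Hab) as [[h1 _] _].
  rewrite Rpower_mult_distr; auto. apply hp. Qed.

Lemma cost_bound p D N s lam sig : (forall i, 0 < p i < 1) -> infinite_sum p 1 ->
  0 < lam < 1 -> (forall i, p i <= lam) -> 0 <= sig < 1 ->
  lsum (fun i => Rpower (p i) s) (Fset D N) <= sig ->
  forall L, lsum (fun ab => Rpower (snd ab) s) (cov p D N L) <=
     Rpower (1 - phat p N) s / (1 - sig) + sig ^ L.
Proof. intros hp hs Hl Hpl Hsig HF. pose proof (Rpower_pos (1 - phat p N) s) as HT.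
  assert (0 < / (1 - sig)) by (apply Rinv_0_lt_compat; lra).
  induction L.
  - simpl. assert (0 < Rpower (1 - phat p N) s / (1 - sig)) by (unfold Rdiv; nra).
    unfold Rpower at 1. rewrite ln_1, Rmult_0_r, exp_0. lra.
  - rewrite cost_step with (lam := lam); auto.
    assert (0 <= lsum (fun ab => Rpower (snd ab) s) (cov p D N L)).
    { apply lsum_nonneg. intros; left; apply Rpower_pos. }
    assert (0 <= lsum (fun i => Rpower (p i) s) (Fset D N)).
    { apply lsum_nonneg. intros; left; apply Rpower_pos. }
    set (T := Rpower (1 - phat p N) s) in *. set (C := lsum _ (cov p D N L)) in *.
    set (F := lsum _ (Fset D N)) in *.
    assert (F * C <= sig * (T / (1 - sig) + sig ^ L)) by nra.
    rewrite Rmult_plus_distr_l in H2.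
    assert (Heq : T / (1 - sig) = T + sig * (T / (1 - sig))) by (field; lra).
    simpl. lra. Qed.

Lemma upper_null p D d s : (forall i, 0 < p i < 1) -> infinite_sum p 1 ->
  infinite_sum (restr_pow p D d) 1 -> 0 <= d -> d < s -> hausdorff_null s (pi_image p D).
Proof. intros hp hs hdsum hd hds delta eps Hdel Heps.
  destruct (p_bound p hp hs) as [lam [Hl Hpl]].
  set (sig := Rpower lam (s - d)).
  assert (Hsig : 0 < sig < 1).
  { split. apply Rpower_pos. unfold sig. pose proof (Rpower_lt_exp lam 0 (s - d) Hl ltac:(lra)).
    rewrite Rpower_O in H; lra. }
  assert (HF : forall N, lsum (fun i => Rpower (p i) s) (Fset D N) <= sig).
  { intros N. eapply Rle_trans with (sig * lsum (fun i => Rpower (p i) d) (Fset D N)).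
    - rewrite <- lsum_scal. apply lsum_le. intros i _.
      replace s with (d + (s - d)) at 1 by ring. rewrite Rpower_plus.
      rewrite Rmult_comm. apply Rmult_le_compat_r. left; apply Rpower_pos.
      apply Rle_Rpower_l. lra. split; [apply hp|apply Hpl].
    - pose proof (Fset_sum p D d N hdsum). nra. }
  set (c := eps * (1 - sig) / 2).
  assert (Hc : 0 < c) by (unfold c; apply Rmult_lt_0_compat; [nra|lra]).
  destruct (phat_to1 p hp hs (Rmin delta (Rpower c (1 / s)))) as [N HN].
  { apply Rmin_glb_lt; auto. apply Rpower_pos. }
  assert (HN1 : 1 - phat p N <= delta) by (pose proof (Rmin_l delta (Rpower c (1/s))); lra).
  assert (HT : Rpower (1 - phat p N) s <= c).
  { pose proof (phat_lt1 p N hp hs).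
    replace c with (Rpower (Rpower c (1 / s)) s).
    apply Rle_Rpower_l. lra. split. lra. pose proof (Rmin_r delta (Rpower c (1/s))); lra.
    rewrite Rpower_mult. replace (1 / s * s) with 1 by (field; lra). apply Rpower_1; auto. }
  destruct (pow_lt_1_zero lam ltac:(rewrite Rabs_right; lra) delta Hdel) as [L1 HL1].
  destruct (pow_lt_1_zero sig ltac:(rewrite Rabs_right; lra) (eps / 2) ltac:(lra)) as [L2 HL2].
  set (L := max L1 L2).
  specialize (HL1 L (Nat.le_max_l _ _)). specialize (HL2 L (Nat.le_max_r _ _)).
  rewrite Rabs_right in HL1 by (left; apply pow_lt; lra).
  rewrite Rabs_right in HL2 by (left; apply pow_lt; lra).
  apply (list_cover _ (cov p D N L)).
  - lra.
  - apply cov_covers; auto.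
  - intros ab Hin. destruct (cov_props p D N L lam hp hs Hl Hpl ab Hin) as [[h1 h2] h3].
    split; auto. split; auto. eapply Rle_trans. exact h2. apply Rmax_lub; lra.
  - eapply Rle_trans. apply (cost_bound p D N s lam sig); auto. lra.
    assert (Rpower (1 - phat p N) s / (1 - sig) <= c / (1 - sig)).
    { unfold Rdiv. apply Rmult_le_compat_r; auto. left; apply Rinv_0_lt_compat; lra. }
    assert (c / (1 - sig) = eps / 2) by (unfold c; field; lra). lra. Qed.

Lemma lsum_zero {A} (f : A -> R) l : (forall a, In a l -> f a = 0) -> lsum f l = 0.
Proof. induction l; simpl; intros H. auto. rewrite H, IHl by auto. lra. Qed.

Lemma count_le1 {A} (P : A -> Prop) l : NoDup l ->
  (forall a b, In a l -> In b l -> P a -> P b -> a = b) -> lsum (fun a => ind (P a)) l <= 1.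
Proof. induction l; intros Hnd Hu; simpl. lra. inversion Hnd; subst.
  unfold ind at 1. destruct excluded_middle_informative as [h|h].
  - rewrite lsum_zero. lra. intros b Hb. unfold ind. destruct excluded_middle_informative as [h'|h']; auto.
    exfalso. assert (b = a) by (apply Hu; simpl; auto). subst; contradiction.
  - assert (lsum (fun a => ind (P a)) l <= 1) by (apply IHl; auto; intros; apply Hu; simpl; auto). lra. Qed.

Definition meets (E : R -> Prop) (p : nat -> R) (m : nat) (j : R * R) : Prop :=
  exists y, E y /\ fst j <= Tmap p m y <= fst j + snd j.

Definition resc (p : nat -> R) (m : nat) (j : R * R) : R * R :=
  ((fst j - phat p m) / p m, snd j / p m).

Lemma key (E : R -> Prop) (p : nat -> R) (ms : list nat) (s g lam tau : R) :
  0 < s -> 0 < tau -> tau <= g -> 0 < lam < 1 ->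
  (forall m, In m ms -> 0 < p m <= lam) -> NoDup ms ->
  1 <= lsum (fun m => Rpower (p m) s) ms ->
  (exists x, E x) ->
  (forall m y, In m ms -> E y -> E (Tmap p m y)) ->
  (forall m m' y y', In m ms -> In m' ms -> E y -> E y' ->
      Rabs (Tmap p m y - Tmap p m' y') < g -> m = m') ->
  forall k (J : list (R * R)), (forall j, In j J -> tau * lam ^ k <= snd j) ->
    (forall x, E x -> exists j, In j J /\ fst j <= x <= fst j + snd j) ->
    Rpower tau s <= lsum (fun j => Rpower (snd j) s) J.
Proof. intros Hs Htau Htg Hlam Hpm Hnd Hsum [x0 Hx0] Hinv Hsep.
  induction k; intros J Hr Hc.
  - destruct (Hc x0 Hx0) as [j [Hj _]]. specialize (Hr j Hj). simpl in Hr.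
    eapply Rle_trans; [|apply (lsum_In_le (fun j => Rpower (snd j) s) J j)]; auto.
    apply Rle_Rpower_l; lra. intros; left; apply Rpower_pos.
  - destruct (classic (exists j, In j J /\ tau <= snd j)) as [[j [Hj Hjt]]|Hno].
    { eapply Rle_trans; [|apply (lsum_In_le (fun j => Rpower (snd j) s) J j)]; auto.
      apply Rle_Rpower_l; lra. intros; left; apply Rpower_pos. }
    assert (Hsmall : forall j, In j J -> snd j < tau).
    { intros j Hj. destruct (Rlt_le_dec (snd j) tau); auto. exfalso; apply Hno; eauto. }
    assert (Hpos : forall j, In j J -> 0 < snd j).
    { intros j Hj. specialize (Hr j Hj). pose proof (pow_lt lam (S k) (proj1 Hlam)). nra. }
    assert (Hm : forall m, In m ms ->
       Rpower tau s * Rpower (p m) s <= lsum (fun j => ind (meets E p m j) * Rpower (snd j) s) J).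
    { intros m Hmin. destruct (Hpm m Hmin) as [Hp1 Hp2].
      assert (HI : Rpower tau s <= lsum (fun j => Rpower (snd j) s)
                    (map (resc p m) (filter (fun j => dec (meets E p m j)) J))).
      { apply IHk.
        - intros j' Hj'. apply in_map_iff in Hj'. destruct Hj' as [j [<- Hj]].
          apply filter_In in Hj. destruct Hj as [Hj _]. specialize (Hr j Hj). simpl in Hr |- *.
          unfold Rdiv. apply (Rmult_le_reg_r (p m)); auto.
          rewrite (Rmult_assoc (snd j)), Rinv_l, Rmult_1_r by lra.
          pose proof (pow_lt lam k (proj1 Hlam)).
          assert (tau * lam ^ k * p m <= tau * lam ^ k * lam) by (apply Rmult_le_compat_l; nra). nra.
        - intros x Hx. destruct (Hc (Tmap p m x) (Hinv m x Hmin Hx)) as [j [Hj Hjc]].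
          exists (resc p m j). split.
          + apply in_map. apply filter_In. split; auto. apply dec_true. exists x; auto.
          + unfold resc, Tmap in *; simpl in *. split.
            * apply (Rmult_le_reg_r (p m)); auto. unfold Rdiv. rewrite Rmult_assoc, Rinv_l by lra. lra.
            * apply (Rmult_le_reg_r (p m)); auto. unfold Rdiv.
              rewrite Rmult_plus_distr_r, !Rmult_assoc, Rinv_l by lra. lra. }
      rewrite lsum_map, lsum_filter in HI.
      apply (Rmult_le_compat_r (Rpower (p m) s)) in HI; [|left; apply Rpower_pos].
      eapply Rle_trans. exact HI. rewrite Rmult_comm, <- lsum_scal. apply lsum_le.
      intros j Hj. simpl. rewrite Rmult_comm, Rmult_assoc. apply Rmult_le_compat_l. apply ind_nonneg.
      rewrite Rpower_mult_distr. right; f_equal. field. lra.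
      apply Rdiv_lt_0_compat; auto. auto. }
    assert (Htot : Rpower tau s * lsum (fun m => Rpower (p m) s) ms <=
                   lsum (fun m => lsum (fun j => ind (meets E p m j) * Rpower (snd j) s) J) ms).
    { rewrite <- lsum_scal. apply lsum_le. auto. }
    rewrite lsum_exchange in Htot.
    assert (Hcnt : lsum (fun j => lsum (fun m => ind (meets E p m j) * Rpower (snd j) s) ms) J
                   <= lsum (fun j => Rpower (snd j) s) J).
    { apply lsum_le. intros j Hj.
      rewrite (lsum_ext _ (fun m => Rpower (snd j) s * ind (meets E p m j))) by (intros; ring).
      rewrite lsum_scal. pose proof (Rpower_pos (snd j) s).
      assert (lsum (fun m => ind (meets E p m j)) ms <= 1).
      { apply count_le1; auto. intros m m' Hm1 Hm2 [y [Hy Hy1]] [y' [Hy' Hy'1]].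
        apply (Hsep m m' y y'); auto. specialize (Hsmall j Hj). apply Rabs_def1; lra. }
      nra. }
    pose proof (Rpower_pos tau s). nra. Qed.

Lemma close p ms lam : (forall i, 0 < p i < 1) -> infinite_sum p 1 -> 0 < lam ->
  (forall m, In m ms -> p m <= lam) ->
  forall k w w' x x', (forall i, In (w i) ms) -> (forall i, (i < k)%nat -> w i = w' i) ->
   is_pi p w x -> is_pi p w' x' -> Rabs (x - x') <= lam ^ k.
Proof. intros hp hs Hl Hpm. induction k; intros w w' x x' Hw Hag Hx Hx'.
  - simpl. apply pi_range1 in Hx; auto. apply pi_range1 in Hx'; auto. apply Rabs_le; lra.
  - destruct (pi_decomp p w x hp hs Hx) as [y [Hy ->]].
    destruct (pi_decomp p w' x' hp hs Hx') as [y' [Hy' ->]].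
    rewrite <- (Hag 0%nat) by lia.
    assert (Rabs (y - y') <= lam ^ k).
    { apply (IHk (fun i => w (S i)) (fun i => w' (S i))); auto. intros i Hi; apply Hag; lia. }
    unfold Tmap. replace (p (w 0%nat) * y + phat p (w 0%nat) - (p (w 0%nat) * y' + phat p (w 0%nat)))
      with (p (w 0%nat) * (y - y')) by ring.
    rewrite Rabs_mult, Rabs_right by (left; apply hp). simpl.
    pose proof (Hpm _ (Hw 0%nat)). pose proof (hp (w 0%nat)). pose proof (Rabs_pos (y - y')).
    pose proof (pow_lt lam k Hl). nra. Qed.

Lemma fin_max (ms : list nat) (Q : nat -> nat -> Prop) :
  (forall m N N', Q m N -> (N <= N')%nat -> Q m N') ->
  (forall m, In m ms -> exists N, Q m N) -> exists N, forall m, In m ms -> Q m N.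
Proof. intros Hmono. induction ms; intros H.
  - exists 0%nat. intros m [].
  - destruct IHms as [N1 HN1]. intros; apply H; simpl; auto.
    destruct (H a (or_introl eq_refl)) as [N2 HN2].
    exists (max N1 N2). intros m [<-|Hm]. eapply Hmono; eauto; lia. eapply Hmono; eauto; lia. Qed.

Definition upd (v : nat -> nat) (k m : nat) : nat -> nat := fun i => if Nat.eqb i k then m else v i.

Lemma konig p ms lam (y R : nat -> R) : (forall i, 0 < p i < 1) -> infinite_sum p 1 -> 0 < lam < 1 ->
  (forall m, In m ms -> p m <= lam) -> ms <> [] ->
  (forall w x, (forall i, In (w i) ms) -> is_pi p w x -> exists n, Rabs (x - y n) < R n) ->
  exists N, forall w x, (forall i, In (w i) ms) -> is_pi p w x -> exists n, (n < N)%nat /\ Rabs (x - y n) < R n.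
Proof. intros hp hs Hl Hpm Hne Hcov.
  set (good := fun (v : nat -> nat) (k : nat) => exists N, forall w x, (forall i, In (w i) ms) ->
     (forall i, (i < k)%nat -> w i = v i) -> is_pi p w x -> exists n, (n < N)%nat /\ Rabs (x - y n) < R n).
  assert (Hstep : forall v k, exists m, In m ms /\ (~ good v k -> ~ good (upd v k m) (S k))).
  { intros v k. destruct (classic (good v k)) as [Hg|Hg].
    - destruct ms as [|m0 ms']. congruence. exists m0. split; simpl; auto.
    - apply NNPP. intros Hc. apply Hg.
      assert (Hall : forall m, In m ms -> good (upd v k m) (S k)).
      { intros m Hm. apply NNPP. intros Hb. apply Hc. exists m. auto. }
      destruct (fin_max ms (fun m N => forall w x, (forall i, In (w i) ms) ->
          (forall i, (i < S k)%nat -> w i = upd v k m i) -> is_pi p w x ->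
          exists n, (n < N)%nat /\ Rabs (x - y n) < R n)) as [N HN].
      + intros m N N' H HN w x H1 H2 H3. destruct (H w x H1 H2 H3) as [n [Hn Hn']]. exists n; split; auto; lia.
      + exact Hall.
      + exists N. intros w x Hw Hag Hx. apply (HN (w k) (Hw k) w x Hw); auto.
        intros i Hi. unfold upd. destruct (Nat.eqb_spec i k). subst; auto. apply Hag; lia. }
  set (f := fun v k => proj1_sig (constructive_indefinite_description _ (Hstep v k))).
  assert (Hf : forall v k, In (f v k) ms /\ (~ good v k -> ~ good (upd v k (f v k)) (S k))).
  { intros v k. unfold f. destruct constructive_indefinite_description; auto. }
  apply NNPP. intros Hbad0.
  assert (Hbad : ~ good (fun _ => 0%nat) 0%nat).
  { intros [N HN]. apply Hbad0. exists N. intros w x Hw Hx. apply (HN w x Hw); auto. intros; lia. }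
  set (path := fix path k := match k with O => (fun _ => 0%nat) | S k' => upd (path k') k' (f (path k') k') end).
  assert (Hpb : forall k, ~ good (path k) k).
  { induction k. exact Hbad. simpl. apply Hf; auto. }
  set (om := fun i => path (S i) i).
  assert (Hom : forall k i, (i < k)%nat -> path k i = om i).
  { induction k; intros i Hi. lia. unfold om. simpl. unfold upd.
    destruct (Nat.eqb_spec i k). subst. simpl. rewrite Nat.eqb_refl. reflexivity.
    rewrite IHk by lia. reflexivity. }
  assert (Homs : forall i, In (om i) ms).
  { intros i. unfold om. simpl. unfold upd. rewrite Nat.eqb_refl. apply Hf. }
  destruct (pi_exists p om hp hs) as [x0 Hx0].
  destruct (Hcov om x0 Homs Hx0) as [n Hn].
  destruct (pow_lt_1_zero lam ltac:(rewrite Rabs_right; lra) (R n - Rabs (x0 - y n)) ltac:(lra)) as [k Hk].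
  specialize (Hk k (le_n _)). rewrite Rabs_right in Hk by (left; apply pow_lt; lra).
  apply (Hpb k). exists (S n). intros w x Hw Hag Hx. exists n. split. lia.
  assert (Rabs (x - x0) <= lam ^ k).
  { apply (close p ms lam hp hs (proj1 Hl) Hpm k w om x x0 Hw); auto.
    intros i Hi. rewrite Hag by auto. apply Hom; auto. }
  pose proof (Rabs_triang (x - x0) (x0 - y n)). replace (x - x0 + (x0 - y n)) with (x - y n) in H0 by ring.
  lra. Qed.

Lemma fin_min_pos (l : list nat) (f : nat -> R) : (forall n, In n l -> 0 < f n) ->
  exists c, 0 < c /\ forall n, In n l -> c <= f n.
Proof. induction l; intros H. exists 1. split. lra. intros n [].
  destruct IHl as [c [Hc Hc']]. intros; apply H; simpl; auto.
  exists (Rmin c (f a)). split. apply Rmin_glb_lt; auto. apply H; simpl; auto.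
  intros n [<-|Hn]. apply Rmin_r. eapply Rle_trans. apply Rmin_l. auto. Qed.

Lemma geom_sum K : lsum (fun n => / 2 ^ (S n)) (seq 0 K) = 1 - / 2 ^ K.
Proof. induction K. simpl. field. rewrite seq_S, lsum_app, IHK. simpl.
  assert (0 < 2 ^ K) by (apply pow_lt; lra). field. lra. Qed.

Lemma cover_term_nonneg s U r n : 0 <= cover_term s U r n.
Proof. unfold cover_term, rpow. destruct excluded_middle_informative; try lra.
  destruct Req_EM_T; [destruct Req_EM_T; lra|left; apply Rpower_pos]. Qed.

Lemma Fset_lsum p D s N : lsum (fun i => Rpower (p i) s) (Fset D (S N)) = sum_f_R0 (restr_pow p D s) N.
Proof. unfold Fset. rewrite lsum_filter. rewrite <- lsum_seq. apply lsum_ext.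
  intros a _. unfold ind, restr_pow. destruct excluded_middle_informative; lra. Qed.

Lemma restr_le p D s d i : (forall i, 0 < p i < 1) -> s <= d -> restr_pow p D d i <= restr_pow p D s i.
Proof. intros hp H. unfold restr_pow. destruct excluded_middle_informative; [|lra].
  apply Rpower_le_exp; auto. pose proof (hp i); lra. Qed.

Lemma choose_ms p D s d : (forall i, 0 < p i < 1) -> (exists i, D i) -> s < d ->
  infinite_sum (restr_pow p D d) 1 ->
  exists N i0, D i0 /\ (i0 <= N)%nat /\ 1 <= sum_f_R0 (restr_pow p D s) N.
Proof. intros hp [i0 Hi0] Hsd hdsum.
  set (gam := Rpower (p i0) s - Rpower (p i0) d).
  assert (Hg : 0 < gam). { unfold gam. pose proof (Rpower_lt_exp (p i0) s d (hp i0) Hsd). lra. }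
  destruct (hdsum gam Hg) as [N1 HN1]. exists (max N1 i0), i0. split; auto. split. lia.
  specialize (HN1 (max N1 i0) (Nat.le_max_l _ _)). unfold Rdist in HN1. apply Rabs_def2 in HN1.
  assert (gam <= sum_f_R0 (fun k => restr_pow p D s k - restr_pow p D d k) (max N1 i0)).
  { replace gam with (restr_pow p D s i0 - restr_pow p D d i0).
    apply (sum_f_R0_ge_term (fun k => restr_pow p D s k - restr_pow p D d k)).
    intros k. pose proof (restr_le p D s d k hp ltac:(lra)). lra. lia.
    unfold restr_pow, gam. destruct excluded_middle_informative; tauto. }
  rewrite sum_f_R0_minus in H. lra. Qed.

Lemma rpow_max a b s : 0 < s -> 0 <= a -> 0 < b -> Rpower (Rmax a b) s <= rpow a s + Rpower b s.
Proof. intros Hs Ha Hb. unfold Rmax. destruct (Rle_dec a b).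
  - assert (0 <= rpow a s). { unfold rpow. destruct Req_EM_T; [destruct Req_EM_T; lra|left; apply Rpower_pos]. } lra.
  - unfold rpow. destruct Req_EM_T. lra. pose proof (Rpower_pos b s). lra. Qed.

Lemma lower_pos p D d s : (forall i, 0 < p i < 1) -> infinite_sum p 1 -> (exists i, D i) ->
  infinite_sum (restr_pow p D d) 1 -> 0 < s -> s < d -> hausdorff_null s (pi_image p D) -> False.
Proof. intros hp hs hD hdsum Hs Hsd Hnull.
  destruct (choose_ms p D s d hp hD Hsd hdsum) as [N [i0 [Hi0 [Hi0N HsumN]]]].
  set (ms := Fset D (S N)).
  assert (Hnd : NoDup ms) by (apply NoDup_filter, seq_NoDup).
  assert (Hsum : 1 <= lsum (fun m => Rpower (p m) s) ms) by (unfold ms; rewrite Fset_lsum; auto).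
  assert (Hi0ms : In i0 ms) by (apply Fset_In; split; auto; lia).
  destruct (p_bound p hp hs) as [lam [Hl Hpl]].
  destruct (fin_min_pos ms p) as [pm [Hpm Hpm']]. intros; apply hp.
  set (B := phat p (S N)). assert (HB : B < 1) by (apply phat_lt1; auto).
  set (g := pm * (1 - B)). assert (Hg : 0 < g) by (unfold g; apply Rmult_lt_0_compat; lra).
  set (E' := pi_image p (fun i => In i ms)).
  assert (HEr : forall y, E' y -> 0 <= y <= B).
  { intros y [w [Hw Hy]]. pose proof (pi_range p w y hp hs Hy).
    pose proof (proj1 (Fset_In D (S N) (w 0%nat)) (Hw 0%nat)) as Hw0. pose proof (phat_mono p (S (w 0%nat)) (S N) hp ltac:(lia)). unfold B. lra. }
  assert (Hsep : forall m m' y y', In m ms -> In m' ms -> E' y -> E' y' ->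
      Rabs (Tmap p m y - Tmap p m' y') < g -> m = m').
  { intros m m' y y' Hm Hm' Hy Hy' Hd. apply HEr in Hy. apply HEr in Hy'.
    pose proof (Hpm' m Hm). pose proof (Hpm' m' Hm'). pose proof (hp m). pose proof (hp m').
    destruct (Nat.lt_trichotomy m m') as [Hlt|[Heq|Hlt]]; auto; exfalso.
    - pose proof (phat_mono p (S m) m' hp Hlt). simpl in H3. unfold Tmap in Hd.
      apply Rabs_def2 in Hd. unfold g in Hd.
      assert (pm * (1 - B) <= p m * (1 - B)) by (apply Rmult_le_compat_r; lra). nra.
    - pose proof (phat_mono p (S m') m hp Hlt). simpl in H3. unfold Tmap in Hd.
      apply Rabs_def2 in Hd. unfold g in Hd.
      assert (pm * (1 - B) <= p m' * (1 - B)) by (apply Rmult_le_compat_r; lra). nra. }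
  assert (Hinv : forall m y, In m ms -> E' y -> E' (Tmap p m y)).
  { intros m y Hm [w [Hw Hy]]. exists (cons_seq m w). split.
    intros [|k]; simpl; auto. apply pi_cons; auto. }
  assert (HEne : exists x, E' x).
  { destruct (pi_exists p (fun _ => i0) hp hs) as [x Hx]. exists x, (fun _ => i0). auto. }
  assert (HK := key E' p ms s g lam g Hs Hg (Rle_refl _) Hl
     ltac:(intros m Hm; split; [apply hp|apply Hpl]) Hnd Hsum HEne Hinv Hsep).
  set (th := Rpower g s / (4 * Rpower 4 s)).
  assert (Hth : 0 < th).
  { unfold th. apply Rdiv_lt_0_compat. apply Rpower_pos. pose proof (Rpower_pos 4 s); lra. }
  destruct (Hnull 1 th ltac:(lra) Hth) as [U [r [l [[Hcov Hdiam] [Hls Hlle]]]]].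
  set (eta := fun n : nat => Rpower (th / 2 ^ (S n)) (1 / s)).
  assert (Heta : forall n, 0 < eta n) by (intros; apply Rpower_pos).
  assert (Heta_s : forall n, Rpower (eta n) s = th / 2 ^ (S n)).
  { intros n. unfold eta. rewrite Rpower_mult. replace (1 / s * s) with 1 by (field; lra).
    apply Rpower_1. apply Rdiv_lt_0_compat; auto. apply pow_lt; lra. }
  set (yv := fun n => match excluded_middle_informative (exists x, U n x) with
        | left h => proj1_sig (constructive_indefinite_description _ h) | right _ => 0 end).
  set (rho := fun n => match excluded_middle_informative (exists x, U n x) with
        | left _ => Rmax (r n) (eta n) | right _ => eta n end).
  assert (Hrho : forall n, 0 < rho n /\ Rpower (rho n) s <= cover_term s U r n + th / 2 ^ (S n) /\
      forall x, U n x -> Rabs (x - yv n) <= rho n).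
  { intros n. unfold rho, yv, cover_term. destruct excluded_middle_informative as [h|h].
    - destruct (constructive_indefinite_description _ h) as [y0 Hy0]; simpl.
      destruct (Hdiam n h) as [Hd _].
      assert (Hr0 : 0 <= r n). { apply Hd. exists y0, y0. repeat split; auto. rewrite Rminus_diag, Rabs_R0; auto. }
      split. eapply Rlt_le_trans. apply (Heta n). apply Rmax_r.
      split. replace (th / (2 * 2 ^ n)) with (Rpower (eta n) s) by (rewrite Heta_s; reflexivity). apply rpow_max; auto.
      intros x Hx. eapply Rle_trans; [|apply Rmax_l]. apply Hd. exists x, y0. auto.
    - split; auto. split. rewrite Heta_s; simpl; lra. intros x Hx. exfalso; eauto. }
  destruct (konig p ms lam yv (fun n => 2 * rho n) hp hs Hl ltac:(intros; apply Hpl)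
     ltac:(intros Hc; rewrite Hc in Hi0ms; contradiction)) as [N0 HN0].
  { intros w x Hw Hx. destruct (Hcov x) as [n Hn]. exists w. split; auto. intros k. apply (Fset_In D (S N)). apply Hw.
    exists n. destruct (Hrho n) as [h1 [_ h3]]. specialize (h3 x Hn). lra. }
  set (J := map (fun n => (yv n - 2 * rho n, 4 * rho n)) (seq 0 N0)).
  destruct (fin_min_pos (seq 0 N0) (fun n => 4 * rho n)) as [c [Hc Hc']].
  { intros n _. destruct (Hrho n); lra. }
  destruct (pow_lt_1_zero lam ltac:(rewrite Rabs_right; lra) (c / g) ltac:(apply Rdiv_lt_0_compat; auto)) as [k Hk].
  specialize (Hk k (le_n _)). rewrite Rabs_right in Hk by (left; apply pow_lt; lra).
  assert (HKJ := HK k J).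
  assert (H1 : Rpower g s <= lsum (fun j => Rpower (snd j) s) J).
  { apply HKJ.
    - intros j Hj. unfold J in Hj. apply in_map_iff in Hj. destruct Hj as [n [<- Hn]]. simpl.
      specialize (Hc' n Hn). apply (Rmult_lt_compat_l g) in Hk; auto.
      replace (g * (c / g)) with c in Hk by (field; lra). lra.
    - intros x [w [Hw Hx]]. destruct (HN0 w x Hw Hx) as [n [Hn Hxn]].
      exists (yv n - 2 * rho n, 4 * rho n). split. unfold J. apply (in_map (fun n => (yv n - 2 * rho n, 4 * rho n))). apply in_seq. lia.
      simpl. apply Rabs_def2 in Hxn. lra. }
  unfold J in H1. rewrite lsum_map in H1. simpl in H1.
  rewrite (lsum_ext _ (fun n => Rpower 4 s * Rpower (rho n) s)) in H1.
  2:{ intros n _. rewrite Rpower_mult_distr. auto. lra. destruct (Hrho n); lra. }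
  rewrite lsum_scal in H1.
  assert (H2 : lsum (fun n => Rpower (rho n) s) (seq 0 N0) <= l + th).
  { eapply Rle_trans. apply lsum_le. intros n _. apply (Hrho n).
    rewrite lsum_plus. rewrite (lsum_ext (fun n => th / 2 ^ S n) (fun n => th * / 2 ^ (S n))) by (intros; reflexivity).
    rewrite lsum_scal, geom_sum.
    assert (0 < / 2 ^ N0) by (apply Rinv_0_lt_compat, pow_lt; lra).
    assert (lsum (cover_term s U r) (seq 0 N0) <= l).
    { destruct N0. simpl. pose proof (partial_le_lim _ l 0 Hls (cover_term_nonneg s U r)).
      pose proof (cover_term_nonneg s U r 0). simpl in H0. lra.
      rewrite lsum_seq. apply partial_le_lim; auto. apply cover_term_nonneg. }
    nra. }
  assert (Hth2 : Rpower 4 s * (2 * th) = Rpower g s / 2).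
  { unfold th. field. pose proof (Rpower_pos 4 s). lra. }
  pose proof (Rpower_pos 4 s). pose proof (Rpower_pos g s). nra. Qed.

Lemma zero_case p D : (forall i, 0 < p i < 1) -> infinite_sum p 1 -> (exists i, D i) ->
  hausdorff_null 0 (pi_image p D) -> False.
Proof. intros hp hs [i0 Hi0] Hnull.
  destruct (Hnull 1 (1/2) ltac:(lra) ltac:(lra)) as [U [r [l [[Hcov Hdiam] [Hls Hlle]]]]].
  destruct (pi_exists p (fun _ => i0) hp hs) as [x0 Hx0].
  destruct (Hcov x0) as [n Hn]. exists (fun _ => i0); auto.
  assert (cover_term 0 U r n = 1).
  { unfold cover_term. destruct excluded_middle_informative as [h|h]; [|exfalso; eauto].
    destruct (Hdiam n h) as [Hd _].
    assert (0 <= r n). { apply Hd. exists x0, x0. repeat split; auto. rewrite Rminus_diag, Rabs_R0; auto. }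
    unfold rpow. destruct Req_EM_T. destruct Req_EM_T; lra. apply Rpower_O. lra. }
  pose proof (partial_le_lim _ l n Hls (cover_term_nonneg 0 U r)).
  pose proof (sum_f_R0_ge_term (cover_term 0 U r) n n (cover_term_nonneg 0 U r) (le_n _)). lra. Qed.

Theorem theorem1 (p : nat -> R) (D : nat -> Prop) (d : R)
  (hp : forall i, 0 < p i < 1)
  (hsum : infinite_sum p 1)
  (hD : exists i, D i)
  (hd : 0 <= d)
  (hdsum : infinite_sum (restr_pow p D d) 1) :
  hausdorff_dim_is (pi_image p D) d.
Proof. split.
  - intros s Hs Hnull. destruct (Rle_dec d s) as [h|h]; auto. exfalso.
    destruct (Req_dec s 0) as [->|Hs0].
    + eapply zero_case; eauto.
    + apply (lower_pos p D d s); auto; lra.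
  - intros b Hb. destruct (Rle_dec b d) as [h|h]; auto. exfalso.
    assert (b <= (b + d) / 2). { apply Hb. lra. apply (upper_null p D d); auto; lra. }
    lra. Qed.
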